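(* There is an absolute constant $C>0$ such that every Hamming-trigraph with sensitivity $\varepsilon\in(0,1]$ has VC-dimension at most $C/\varepsilon^2$ (independently of the dimension $N$).
   Context: A trigraph is $T=(V,E,R)$ where $V$ is a finite vertex set, $E$ (plain edges) and $R$ (red edges) are disjoint sets of unordered pairs of distinct vertices; $N[v]$ is $v$ together with its plain neighbours and $R(v)$ its red neighbours. A set $X\subseteq V$ is shattered if there is a set $S$ of $2^{|X|}$ vertices, none having a red neighbour in $X$, such that for every $Y\subseteq X$ some $v_Y\in S$ has $N[v_Y]\cap X=Y$; the VC-dimension is the largest size of a shattered set. A Hamming-trigraph with threshold $\tau$ and sensitivity $\varepsilon$ is a trigraph with $V\subseteq\{0,1\}^N$ for some $N$, $E=\{uv:d_H(u,v)\leq\tau N\}$ and $R=\{uv:\tau N<d_H(u,v)\leq(\tau+\varepsilon)N\}$, where $d_H$ is Hamming distance. *)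

(* Defs.v *)
From HB Require Import structures.
From mathcomp Require Import all_boot all_order all_algebra.
From mathcomp Require Import reals.
Set Implicit Arguments. Unset Strict Implicit. Unset Printing Implicit Defensive.
Import Order.TTheory GRing.Theory Num.Theory.

Section Trigraph.
Variable T : finType.
(* A trigraph on vertex set V : {set T}, plain edges E and red edges R given
   as (symmetric) relations on T; only pairs of vertices of V matter. *)
Variables (V : {set T}) (E Rd : rel T).

Definition closed_nbhd (v : T) : {set T} := [set u in V | (u == v) || E v u].
Definition red_nbhd (v : T) : {set T} := [set u in V | Rd v u].

Definition shattered (X : {set T}) : bool :=
  (X \subset V) &&
  [exists S : {set T},
    [&& S \subset V, #|S| == 2 ^ #|X|,
        [forall v in S, red_nbhd v :&: X == set0] &
        [forall Y : {set T}, (Y \subset X) ==>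
            [exists v in S, closed_nbhd v :&: X == Y]]]].

Definition vc_dim : nat := \max_(X : {set T} | shattered X) #|X|.
End Trigraph.

Section Hamming.
Variable R : realType.
Local Open Scope ring_scope.

Definition hamming_dist (N : nat) (u v : {ffun 'I_N -> bool}) : nat :=
  #|[set i | u i != v i]|.

Definition hamming_E (N : nat) (tau : R) : rel {ffun 'I_N -> bool} :=
  fun u v => (u != v) && ((hamming_dist u v)%:R <= tau * N%:R).

Definition hamming_R (N : nat) (tau eps : R) : rel {ffun 'I_N -> bool} :=
  fun u v => [&& u != v, tau * N%:R < (hamming_dist u v)%:R &
                 (hamming_dist u v)%:R <= (tau + eps) * N%:R].
End Hamming.
Arguments hamming_E {R} N tau.
Arguments hamming_R {R} N tau eps.

(* Main.v *)
Require Import Defs.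
From HB Require Import structures.
From mathcomp Require Import all_boot all_order all_algebra.
From mathcomp Require Import reals.
From mathcomp Require Import ring lra.
Import Order.TTheory GRing.Theory Num.Theory.
Local Open Scope ring_scope.

Section Signs.
Variables (R : realType) (T : finType) (X : {set T}).

Definition sg (Y : {set T}) (x : T) : R := if x \in Y then -1 else 1.
Definition flip (x : T) (Y : {set T}) : {set T} :=
  if x \in Y then Y :\ x else x |: Y.

Lemma flipK x : involutive (flip x).
Proof.
move=> Y; rewrite /flip; case: (boolP (x \in Y)) => xY.
  by rewrite setD11 setD1K.
by rewrite setU11 setU1K.
Qed.

Lemma flip_sub x Y : x \in X -> (flip x Y \in powerset X) = (Y \in powerset X).
Proof.
move=> xX; rewrite !powersetE /flip; case: (boolP (x \in Y)) => xY.
  apply/subsetP/subsetP => h z; have := h z; rewrite !inE.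
    case: (eqVneq z x) => [->|//] _; by rewrite xX.
  by move=> hz /andP[_ /hz].
apply/subsetP/subsetP => h z.
  move=> hz; apply: h; by rewrite inE hz orbT.
rewrite !inE => /orP [/eqP->|]; [done|exact: h].
Qed.

Lemma sg_flip x Y : sg (flip x Y) x = - sg Y x.
Proof.
rewrite /sg /flip; case: (boolP (x \in Y)) => xY; rewrite ?setD11 ?xY ?setU11 ?opprK //.
Qed.

Lemma sg_flip_neq x y Y : y != x -> sg (flip x Y) y = sg Y y.
Proof.
move=> yx; rewrite /sg /flip; case: (boolP (x \in Y)) => xY; rewrite !inE (negbTE yx) //.
Qed.

Lemma sum_odd (x : T) (F : {set T} -> R) : x \in X ->
  (forall Y, F (flip x Y) = - F Y) -> \sum_(Y in powerset X) F Y = 0.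
Proof.
move=> xX hF; set S := \sum_(Y in _) _.
have : S = - S.
  rewrite {1}/S (reindex_inj (inv_inj (flipK x))) /=.
  rewrite (eq_bigl (fun Y => Y \in powerset X)) => [|Y]; last by rewrite flip_sub.
  by rewrite /S -sumrN; apply: eq_bigr => Y _; exact: hF.
move/eqP; rewrite -addr_eq0 -mulr2n mulrn_eq0 /=; by move/eqP.
Qed.

Lemma card_pow : \sum_(Y in powerset X) (1 : R) = 2 ^+ #|X|.
Proof. by rewrite sumr_const card_powerset natrX. Qed.

Lemma sum_sg1 x : x \in X -> \sum_(Y in powerset X) sg Y x = 0.
Proof. move=> xX; apply: (@sum_odd x (fun Y => sg Y x) xX) => Y; exact: sg_flip. Qed.

Lemma sum_sg2 x y : x \in X -> y \in X ->
  \sum_(Y in powerset X) sg Y x * sg Y y = if x == y then 2 ^+ #|X| else 0.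
Proof.
move=> xX yX; case: eqP => [<-|nxy].
  rewrite -card_pow; apply: eq_bigr => Y _; rewrite /sg; case: ifP => _.
    by rewrite mulN1r opprK. by rewrite mulr1.
apply: (@sum_odd x (fun Y => sg Y x * sg Y y) xX) => Y; rewrite sg_flip sg_flip_neq ?mulNr //.
by apply/eqP => e; apply: nxy.
Qed.

Lemma sum_sq (a : T -> R) :
  \sum_(Y in powerset X) (\sum_(x in X) sg Y x * a x) ^+ 2
  = 2 ^+ #|X| * \sum_(x in X) a x ^+ 2.
Proof.
under eq_bigr do rewrite expr2 mulr_suml.
under eq_bigr do under eq_bigr do rewrite mulr_sumr.
rewrite exchange_big /=.
under eq_bigr do rewrite exchange_big /=.
rewrite mulr_sumr; apply: eq_bigr => x xX.
rewrite (bigD1 x) //= [Z in _ + Z]big1 ?addr0.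
  have := @sum_sg2 x x xX xX; rewrite eqxx => <-; rewrite mulr_suml; apply: eq_bigr => Y _.
  by rewrite expr2; ring.
move=> y /andP [yX yx].
have : \sum_(Y in powerset X) sg Y x * sg Y y = 0.
  by rewrite sum_sg2 // eq_sym (negbTE yx).
move=> h; transitivity (a x * a y * \sum_(Y in powerset X) sg Y x * sg Y y);
  last by rewrite h mulr0.
by rewrite mulr_sumr; apply: eq_bigr => Y _; ring.
Qed.

Lemma L_bound (a : T -> R) (t : R) : (forall x, a x ^+ 2 <= 1) -> 0 < t ->
  2 * t * \sum_(Y in powerset X) `|\sum_(x in X) sg Y x * a x|
  <= 2 ^+ #|X| * (#|X|%:R + t ^+ 2).
Proof.
move=> ha t0.
have hK : (0 : R) <= 2 ^+ #|X| by apply: exprn_ge0.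
apply: (le_trans (y := \sum_(Y in powerset X)
    ((\sum_(x in X) sg Y x * a x) ^+ 2 + t ^+ 2))).
  rewrite mulr_sumr; apply: ler_sum => Y _.
  set u := \sum_(x in X) _.
  have h : u ^+ 2 = `|u| ^+ 2 by rewrite real_normK ?num_real.
  have hn : 0 <= `|u| by [].
  rewrite h; have := sqr_ge0 (`|u| - t); rewrite !expr2; nra.
rewrite big_split /= sum_sq sumr_const card_powerset -[t ^+ 2 *+ _]mulr_natr natrX.
rewrite mulrDr [_ * t ^+ 2]mulrC lerD2r ler_wpM2l //.
rewrite -[#|X|%:R]mulr1n -sumr_const; apply: ler_sum => x _; exact: ha.
Qed.

End Signs.

Arguments sg {R T}.
Arguments sum_sg1 {R T X x}.
Arguments L_bound {R T} X a t.

Section Main.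
Variable R : realType.
Variable N : nat.
Notation F := {ffun 'I_N -> bool}.

Lemma dist0 (u v : F) : hamming_dist u v = 0%N -> u = v.
Proof.
rewrite /hamming_dist => /eqP; rewrite cards_eq0 => /eqP h.
apply/ffunP => i; apply/eqP/negPn/negP => hi.
have : i \in [set i | u i != v i] by rewrite inE.
by rewrite h inE.
Qed.

Lemma dist_sum (u v : F) :
  (hamming_dist u v)%:R = \sum_(j < N) (if u j != v j then 1 else 0 : R).
Proof.
rewrite /hamming_dist -sum1_card natr_sum big_mkcond /=.
by apply: eq_bigr => j _; rewrite inE; case: ifP.
Qed.

Lemma coord_bound (X Y : {set F}) (v : F) (j : 'I_N) :
  \sum_(x in X) sg Y x * (if v j != x j then 1 else 0 : R)
  <= `|\sum_(x in X) sg Y x * (1 : R)|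
     + `|\sum_(x in X) sg Y x * (if x j then 1 else 0 : R)|.
Proof.
set A := \sum_(x in X) sg Y x * (1 : R).
set B := \sum_(x in X) sg Y x * (if x j then 1 else 0 : R).
have hAB : \sum_(x in X) sg Y x * (if v j != x j then 1 else 0 : R)
   = if v j then A - B else B.
  rewrite /A /B; case: (v j).
    rewrite -sumrB; apply: eq_bigr => x _; case: (x j) => /=;
      by rewrite ?mulr1 ?mulr0 ?subrr ?subr0.
  by apply: eq_bigr => x _; case: (x j).
rewrite hAB; have := ler_norm A; have := ler_norm B; have := ler_norm (- B).
rewrite normrN; have := normr_ge0 A; case: (v j) => *; lra.
Qed.


Lemma core (X : {set F}) (v : {set F} -> F) (tau eps : R) :
  0 < eps -> (0 < N)%N ->
  (forall Y x, Y \in powerset X -> x \in X -> x \in Y ->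
     (hamming_dist (v Y) x)%:R <= tau * N%:R) ->
  (forall Y x, Y \in powerset X -> x \in X -> x \notin Y ->
     (tau + eps) * N%:R < (hamming_dist (v Y) x)%:R) ->
  (#|X|%:R : R) <= 16 / eps ^+ 2.
Proof.
move=> e0 N0 h1 h2.
set n : R := N%:R; set d : R := #|X|%:R; set K : R := 2 ^+ #|X|.
set Q : R := \sum_(Y in powerset X) \sum_(x in X) sg Y x * (hamming_dist (v Y) x)%:R.
have low : (eps * n / 2 * K) * d <= Q.
  have : \sum_(Y in powerset X) \sum_(x in X)
          (eps * n / 2 + (eps * n / 2 + tau * n) * sg Y x) <= Q.
    apply: ler_sum => Y hY; apply: ler_sum => x hx; rewrite /sg; case: ifP => xY.
      by have := h1 Y x hY hx xY; rewrite -/n; lra.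
    by have := h2 Y x hY hx (negbT xY); rewrite -/n; lra.
  rewrite exchange_big /= (eq_bigr (fun _ => eps * n / 2 * K)).
    by rewrite sumr_const -[_ *+ #|X|]mulr_natr.
  move=> x hx; rewrite big_split /= -[Z in _ + Z]mulr_sumr.
  by rewrite (sum_sg1 hx) mulr0 addr0 sumr_const card_powerset -[_ *+ _]mulr_natr natrX.
have Kp : 0 < K by rewrite exprn_gt0.
have np : 0 < n by rewrite ltr0n.
set t : R := 4 / eps.
have tp : 0 < t by rewrite divr_gt0.
have up : 2 * t * Q <= n * (2 * (K * (d + t ^+ 2))).
  apply: (le_trans (y := 2 * t * \sum_(j < N) \sum_(Y in powerset X)
     (`|\sum_(x in X) sg Y x * (1 : R)|
      + `|\sum_(x in X) sg Y x * (if x j then 1 else 0 : R)|))).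
    rewrite ler_pM2l ?mulr_gt0 ?invr_gt0 // exchange_big /=; apply: ler_sum => Y hY.
    rewrite (eq_bigr (fun x => \sum_(j < N) sg Y x * (if v Y j != x j then 1 else 0 : R))); last first.
      by move=> z _; rewrite dist_sum mulr_sumr.
    rewrite exchange_big /=; apply: ler_sum => j _; exact: coord_bound.
  apply: (le_trans (y := \sum_(j < N) (2 * (K * (d + t ^+ 2))))); last first.
    by rewrite sumr_const card_ord -[_ *+ N]mulr_natl.
  rewrite mulr_sumr; apply: ler_sum => j _; rewrite big_split /= mulrDr.
  have hA := L_bound X (fun _ => (1 : R)) t (fun _ => ltac:(by rewrite expr1n)) tp.
  have hb : forall x : F, (if x j then 1 else 0 : R) ^+ 2 <= 1.
    by move=> x; case: (x j); rewrite ?expr1n // expr2 mul0r ler01.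
  have hB := L_bound X (fun x : F => if x j then 1 else 0 : R) t hb tp.
  rewrite -/K -/d in hA hB; lra.
have hnK : 0 < n * K by rewrite mulr_gt0.
have en : eps != 0 by rewrite gt_eqF.
have e : t * eps = 4 by rewrite /t; field.
have h : (4 * d) * (n * K) <= (2 * (d + t ^+ 2)) * (n * K).
  have hh : 2 * t * (eps * n / 2 * K * d) <= 2 * t * Q.
    by rewrite ler_pM2l // mulr_gt0.
  have -> : (4 * d) * (n * K) = 2 * t * (eps * n / 2 * K * d).
    by rewrite -e; field.
  have -> : (2 * (d + t ^+ 2)) * (n * K) = n * (2 * (K * (d + t ^+ 2))) by ring.
  exact: le_trans hh up.
rewrite ler_pM2r // in h.
have ht : t ^+ 2 = 16 / eps ^+ 2 by rewrite /t; field.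
rewrite -ht; lra.
Qed.


Lemma dist_refl (u : F) : hamming_dist u u = 0%N.
Proof.
by apply/eqP; rewrite cards_eq0; apply/eqP/setP => i; rewrite !inE eqxx.
Qed.

Lemma shattered_bound (V X : {set F}) (tau eps : R) : 0 < eps -> eps <= 1 ->
  shattered V (hamming_E N tau) (hamming_R N tau eps) X ->
  (#|X|%:R : R) <= 16 / eps ^+ 2.
Proof.
move=> e0 e1 /andP [XV /existsP [S /and4P [SV _ redS allY]]].
have hge : 1 <= 16 / eps ^+ 2.
  rewrite ler_pdivlMr ?exprn_gt0 // mul1r expr2; nra.
case: (lerP (tau * N%:R) 0) => htau.
  have := forallP allY X; rewrite subxx /= => /existsP [v /andP [vS /eqP hv]].
  have : X \subset [set v].
    apply/subsetP => x xX; rewrite inE.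
    have : x \in closed_nbhd V (hamming_E N tau) v :&: X by rewrite hv.
    rewrite !inE xX andbT => /andP [_ /orP [//|/andP [nvx hd]]].
    have hd0 : hamming_dist v x = 0%N.
      by apply/eqP; have := le_trans hd htau; rewrite lern0.
    by rewrite (@dist0 v x hd0) eqxx in nvx.
  move/subset_leq_card; rewrite cards1 => h1.
  by apply: le_trans hge; rewrite -[1 : R]/(1%:R) ler_nat.
have N0 : (0 < N)%N.
  rewrite lt0n; apply/eqP => N0; move: htau; by rewrite N0 mulr0 ltxx.
have tau0 : 0 <= tau.
  rewrite leNgt; apply/negP => ht.
  have hN : (0 : R) <= N%:R by rewrite ler0n.
  have : tau * N%:R <= 0 by nra.
  by rewrite leNgt htau.
pose vY Y := odflt [ffun => false]
  [pick w in S | closed_nbhd V (hamming_E N tau) w :&: X == Y].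
have hvY : forall Y, Y \in powerset X ->
    vY Y \in S /\ closed_nbhd V (hamming_E N tau) (vY Y) :&: X = Y.
  move=> Y; rewrite powersetE => hY.
  have := forallP allY Y; rewrite hY /= => /existsP [w /andP [wS hw]].
  rewrite /vY; case: pickP => [u /andP [uS /eqP hu] | /(_ w)]; first by [].
  by rewrite wS hw.
apply: (@core X vY tau eps e0 N0).
  move=> Y x hY xX xY; have [vS hc] := hvY Y hY.
  have : x \in closed_nbhd V (hamming_E N tau) (vY Y) :&: X by rewrite hc.
  rewrite !inE xX andbT => /andP [_ /orP [/eqP ->|/andP [_ //]]].
  by rewrite dist_refl mulr_ge0 ?ler0n.
move=> Y x hY xX xY; have [vS hc] := hvY Y hY.
have hn : x \notin closed_nbhd V (hamming_E N tau) (vY Y) :&: X by rewrite hc.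
have hr : x \notin red_nbhd V (hamming_R N tau eps) (vY Y) :&: X.
  by have := forallP redS (vY Y); rewrite vS /= => /eqP ->; rewrite inE.
move: hn hr; rewrite !inE xX (subsetP XV x xX) /= !andbT.
rewrite /hamming_E /hamming_R.
case: (eqVneq x (vY Y)) => [hx | nx].
  by [].
rewrite /= -ltNge => hlt; rewrite hlt /= -ltNge; exact: id.
Qed.

End Main.

Theorem theorem4p1 (R : realType) :
  exists C : R, 0 < C /\
    forall (N : nat) (V : {set {ffun 'I_N -> bool}}) (tau eps : R),
      0 < eps -> eps <= 1 ->
      (vc_dim V (hamming_E N tau) (hamming_R N tau eps))%:R <= C / eps ^+ 2.
Proof.
exists 16; split; first by rewrite ltr0n.
move=> N V tau eps e0 e1; rewrite /vc_dim.
apply: (big_ind (fun m : nat => (m%:R : R) <= 16 / eps ^+ 2)).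
- by rewrite divr_ge0 ?exprn_ge0 ?ltW.
- move=> m k hm hk; case: (leqP m k) => h.
    by [].
  by [].
- move=> X hX; exact: shattered_bound hX.
Qed.
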